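(* Let $\ell,r\in\mathcal{D}[0,\infty)$ with $\ell\le r$, let $c_0,c_0'\in\mathbb{R}$ and $\psi,\psi'\in\mathcal{D}[0,\infty)$, and suppose $(\phi,\eta)$ and $(\phi',\eta')$ solve the ESP on $[\ell(\cdot),r(\cdot)]$ for $c_0+\psi$ and $c_0'+\psi'$, respectively. If $\psi=\psi'+\nu$ for some non-decreasing $\nu\in\mathcal{D}[0,\infty)$ with $\nu(0)=0$, then for each $t\ge0$: (1) $\big[-[c_0-c_0']^+-\nu(t)\big]\vee\big[-(r(t)-\ell(t))\big]\le\phi'(t)-\phi(t)\le[c_0'-c_0]^+\wedge[r(t)-\ell(t)]$; (2) $\eta(t)-[c_0'-c_0]^+\le\eta'(t)\le\eta(t)+\nu(t)+[c_0-c_0']^+$.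
   Context: $\mathcal{D}[0,\infty)$ denotes the càdlàg functions $[0,\infty)\to(-\infty,\infty)$; $a\wedge b=\min\{a,b\}$, $a\vee b=\max\{a,b\}$, $a^+=a\vee0$. ESP: $(\phi,\eta)\in\mathcal{D}[0,\infty)^2$ solves the ESP on $[\ell(\cdot),r(\cdot)]$ for $\psi$ if (1) $\phi(t)=\psi(t)+\eta(t)\in[\ell(t),r(t)]$ for all $t\ge0$; (2) for all $0\le s\le t$: $\eta(t)-\eta(s)\ge0$ if $\phi(u)<r(u)$ for all $u\in(s,t]$, and $\eta(t)-\eta(s)\le0$ if $\phi(u)>\ell(u)$ for all $u\in(s,t]$; (3) for all $t\ge0$: $\eta(t)-\eta(t-)\ge0$ if $\phi(t)<r(t)$, and $\eta(t)-\eta(t-)\le0$ if $\phi(t)>\ell(t)$, where $\eta(0-)=0$. *)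

(* Defs.v *)
From Stdlib Require Import Reals Lra.
Open Scope R_scope.

Definition right_cont (f : R -> R) (t : R) : Prop :=
  forall eps, 0 < eps -> exists delta, 0 < delta /\
    forall s, t <= s < t + delta -> Rabs (f s - f t) < eps.

Definition left_lim (f : R -> R) (t L : R) : Prop :=
  forall eps, 0 < eps -> exists delta, 0 < delta /\
    forall s, 0 <= s -> t - delta < s < t -> Rabs (f s - L) < eps.

(* Càdlàg functions on [0,oo): values on (-oo,0) are irrelevant. *)
Definition cadlag (f : R -> R) : Prop :=
  (forall t, 0 <= t -> right_cont f t) /\
  (forall t, 0 < t -> exists L, left_lim f t L).

(* f(t-) = L, with the convention f(0-) = 0. *)
Definition left_val (f : R -> R) (t L : R) : Prop :=
  (t = 0 /\ L = 0) \/ (0 < t /\ left_lim f t L).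

Definition pos_part (a : R) : R := Rmax a 0.

Definition ESP (l r psi phi eta : R -> R) : Prop :=
  cadlag phi /\ cadlag eta /\
  (forall t, 0 <= t -> phi t = psi t + eta t /\ l t <= phi t <= r t) /\
  (forall s t, 0 <= s <= t ->
     ((forall u, s < u <= t -> phi u < r u) -> eta t - eta s >= 0) /\
     ((forall u, s < u <= t -> phi u > l u) -> eta t - eta s <= 0)) /\
  (forall t L, 0 <= t -> left_val eta t L ->
     (phi t < r t -> eta t - L >= 0) /\
     (phi t > l t -> eta t - L <= 0)).

(* Main.v *)
Require Import Defs.
From Stdlib Require Import Reals Lra Classical.
Open Scope R_scope.

Lemma key (l r phiA phiB eA eB g X : R -> R) (k : R) :
 (forall u, 0<=u -> l u <= phiA u <= r u) ->
 (forall u, 0<=u -> l u <= phiB u <= r u) ->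
 (forall s t, 0<=s<=t -> (forall u, s<u<=t -> phiA u > l u) -> eA t - eA s <= 0) ->
 (forall s t, 0<=s<=t -> (forall u, s<u<=t -> phiB u < r u) -> eB t - eB s >= 0) ->
 (forall t L, 0<=t -> left_val eA t L -> phiA t > l t -> eA t - L <= 0) ->
 (forall t L, 0<=t -> left_val eB t L -> phiB t < r t -> eB t - L >= 0) ->
 (forall t, 0<t -> exists L, left_lim eA t L) ->
 (forall t, 0<t -> exists L, left_lim eB t L) ->
 (forall s t, 0<=s<=t -> g s <= g t) -> g 0 = 0 ->
 (forall u, 0<=u -> X u = k + eA u - eB u - g u) ->
 (forall u, 0<=u -> X u > 0 -> phiA u > phiB u) ->
 forall t, 0<=t -> X t <= pos_part k.
Proof.
intros HrA HrB HiA HiB HjA HjB HlA HlB Hg Hg0 HX HXp t Ht.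
assert (Hkp: k <= pos_part k /\ 0 <= pos_part k)
  by (unfold pos_part, Rmax; destruct Rle_dec; lra).
destruct (Rle_dec (X t) (pos_part k)) as [|Hn]; [assumption|exfalso].
set (E := fun u => 0<=u<=t /\ X u <= pos_part k).
assert (E0 : E 0).
{ split; [lra|]. destruct (Rle_dec (X 0) 0) as [|H0]; [lra|].
  assert (P := HXp 0 (Rle_refl 0) ltac:(lra)).
  specialize (HrA 0 (Rle_refl 0)); specialize (HrB 0 (Rle_refl 0)).
  assert (lv : forall f, left_val f 0 0) by (intros; left; split; reflexivity).
  assert (a := HjA 0 0 (Rle_refl 0) (lv _) ltac:(lra)).
  assert (b := HjB 0 0 (Rle_refl 0) (lv _) ltac:(lra)).
  rewrite (HX 0 (Rle_refl 0)), Hg0. lra. }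
assert (Hb : bound E) by (exists t; intros u [[_ Hu] _]; exact Hu).
destruct (completeness E Hb (ex_intro _ 0 E0)) as [s [Hub Hlub]].
assert (Hst : s <= t) by (apply Hlub; intros u [[_ Hu] _]; exact Hu).
assert (Hs0 : 0 <= s) by (apply Hub; exact E0).
assert (Hafter : forall u, s < u <= t -> X u > pos_part k).
{ intros u Hu. destruct (Rle_dec (X u) (pos_part k)); [|lra].
  assert (E u) by (split; [lra|assumption]). apply Hub in H. lra. }
destruct (classic (E s)) as [Es|nEs].
- destruct Es as [_ Xs].
  assert (Hst' : s < t) by (destruct (Req_dec s t); [subst; lra|lra]).
  assert (a := HiA s t ltac:(lra) ltac:(intros u Hu; specialize (Hafter u Hu);
     specialize (HXp u ltac:(lra) ltac:(lra)); specialize (HrB u ltac:(lra)); lra)).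
  assert (b := HiB s t ltac:(lra) ltac:(intros u Hu; specialize (Hafter u Hu);
     specialize (HXp u ltac:(lra) ltac:(lra)); specialize (HrA u ltac:(lra)); lra)).
  assert (c := Hg s t ltac:(lra)).
  rewrite (HX s Hs0) in Xs. rewrite (HX t Ht) in Hn. lra.
- assert (Xs : X s > pos_part k).
  { destruct (Rle_dec (X s) (pos_part k)); [|lra]. exfalso; apply nEs; split; [lra|assumption]. }
  assert (Hsp : 0 < s).
  { destruct (Req_dec s 0); [|lra]. subst. exfalso; apply nEs; exact E0. }
  assert (P := HXp s Hs0 ltac:(lra)).
  specialize (HrA s Hs0); specialize (HrB s Hs0).
  destruct (HlA s Hsp) as [LA HLA]. destruct (HlB s Hsp) as [LB HLB].
  assert (a := HjA s LA Hs0 ltac:(right; split; assumption) ltac:(lra)).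
  assert (b := HjB s LB Hs0 ltac:(right; split; assumption) ltac:(lra)).
  assert (Hlim : LA - LB <= pos_part k - k + g s).
  { destruct (Rle_dec (LA - LB) (pos_part k - k + g s)) as [|Hd]; [assumption|exfalso].
    set (d := LA - LB - (pos_part k - k + g s)).
    destruct (HLA (d/2) ltac:(unfold d; lra)) as [dA [HdA HA]].
    destruct (HLB (d/2) ltac:(unfold d; lra)) as [dB [HdB HB]].
    assert (Hex : exists u, E u /\ s - Rmin dA dB < u).
    { apply NNPP; intro Hno.
      assert (is_upper_bound E (s - Rmin dA dB)).
      { intros u Eu. destruct (Rle_dec u (s - Rmin dA dB)); auto.
        exfalso; apply Hno; exists u; split; auto; lra. }
      apply Hlub in H. assert (0 < Rmin dA dB) by (apply Rmin_pos; lra). lra. }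
    destruct Hex as [u [Eu Hu]].
    assert (Hus : u <= s) by (apply Hub; exact Eu).
    assert (Hus' : u < s) by (destruct (Req_dec u s); [subst; contradiction|lra]).
    destruct Eu as [[Hu0 _] Xu].
    assert (m1 := Rmin_l dA dB). assert (m2 := Rmin_r dA dB).
    assert (HA' := HA u Hu0 ltac:(lra)). assert (HB' := HB u Hu0 ltac:(lra)).
    apply Rabs_def2 in HA'. apply Rabs_def2 in HB'.
    assert (gu := Hg u s ltac:(lra)).
    rewrite (HX u Hu0) in Xu. unfold d in *. lra. }
  rewrite (HX s Hs0) in Xs. lra.
Qed.

Theorem proposition3p4
  (l r : R -> R) (c0 c0' : R) (psi psi' phi eta phi' eta' nu : R -> R) :
  cadlag l -> cadlag r -> (forall t, 0 <= t -> l t <= r t) ->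
  cadlag psi -> cadlag psi' ->
  ESP l r (fun t => c0 + psi t) phi eta ->
  ESP l r (fun t => c0' + psi' t) phi' eta' ->
  cadlag nu -> (forall s t, 0 <= s <= t -> nu s <= nu t) -> nu 0 = 0 ->
  (forall t, 0 <= t -> psi t = psi' t + nu t) ->
  forall t, 0 <= t ->
    Rmax (- pos_part (c0 - c0') - nu t) (- (r t - l t)) <= phi' t - phi t
    /\ phi' t - phi t <= Rmin (pos_part (c0' - c0)) (r t - l t)
    /\ eta t - pos_part (c0' - c0) <= eta' t
    /\ eta' t <= eta t + nu t + pos_part (c0 - c0').
Proof.
intros _ _ _ _ _ [_ [[_ Hle] [H3 [H4 H5]]]] [_ [[_ Hle'] [H3' [H4' H5']]]] _ Hnu Hnu0 Hpsi t Ht.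
assert (HA : phi' t - phi t <= pos_part (c0' - c0)).
{ apply (key l r phi' phi eta' eta nu (fun u => phi' u - phi u) (c0' - c0)); auto.
  - intros u Hu; apply H3'; auto.
  - intros u Hu; apply H3; auto.
  - intros s t0 Hs Hh; apply (H4' s t0 Hs); auto.
  - intros s t0 Hs Hh; apply (H4 s t0 Hs); auto.
  - intros t0 L Ht0 Hl Hh; apply (H5' t0 L Ht0 Hl); auto.
  - intros t0 L Ht0 Hl Hh; apply (H5 t0 L Ht0 Hl); auto.
  - intros u Hu. destruct (H3 u Hu) as [e _]. destruct (H3' u Hu) as [e' _].
    rewrite e, e', (Hpsi u Hu). ring.
  - intros u Hu Hx; lra. }
assert (HB : phi t - phi' t - nu t <= pos_part (c0 - c0')).
{ apply (key l r phi phi' eta eta' (fun _ => 0) (fun u => phi u - phi' u - nu u) (c0 - c0')).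
  - intros u Hu; apply H3; auto.
  - intros u Hu; apply H3'; auto.
  - intros s t0 Hs Hh; apply (H4 s t0 Hs); auto.
  - intros s t0 Hs Hh; apply (H4' s t0 Hs); auto.
  - intros t0 L Ht0 Hl Hh; apply (H5 t0 L Ht0 Hl); auto.
  - intros t0 L Ht0 Hl Hh; apply (H5' t0 L Ht0 Hl); auto.
  - exact Hle.
  - exact Hle'.
  - intros; lra.
  - reflexivity.
  - intros u Hu. destruct (H3 u Hu) as [e _]. destruct (H3' u Hu) as [e' _].
    rewrite e, e', (Hpsi u Hu). ring.
  - intros u Hu Hx. assert (nu 0 <= nu u) by (apply Hnu; lra). lra.
  - exact Ht. }
destruct (H3 t Ht) as [e r1]. destruct (H3' t Ht) as [e' r2].
rewrite (Hpsi t Ht) in e.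
unfold pos_part in *.
split; [apply Rmax_lub|split; [apply Rmin_glb|]]; unfold Rmax in *;
  repeat destruct Rle_dec; lra.
Qed.
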